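(* Let $G$ be a simple graph on $n$ vertices and let $f$ be its associated quadratic Boolean function. Then for every graph $H$ in the LC orbit $[G]$, the Boolean function associated with $H$ has $\mathrm{PAR}_{IHN}=2^{\lambda(G)}$. In particular $\mathrm{PAR}_{IHN}(f)=2^{\lambda(G)}$.
   Context: All graphs are finite, simple and undirected, with vertex set $\{0,\dots,n-1\}$. The Boolean function associated with $G$ is $f(\boldsymbol{x})=\sum_{\{i,j\}\in E(G)} x_ix_j \pmod 2$, $\boldsymbol{x}\in\mathbb{Z}_2^n$. For $v\in V$ with neighbourhood $N_v$, the local complementation $G^v$ complements the subgraph induced on $N_v$; the LC orbit $[G]$ is the set of graphs obtainable from $G$ by finite sequences of local complementations. $\alpha(G)$ is the independence number and $\lambda(G)=\max_{H\in[G]}\alpha(H)$. Let $I=\begin{pmatrix}1&0\\0&1\end{pmatrix}$, $H=\frac1{\sqrt2}\begin{pmatrix}1&1\\1&-1\end{pmatrix}$, $N=\frac1{\sqrt2}\begin{pmatrix}1&i\\1&-i\end{pmatrix}$ with $i^2=-1$. For a Boolean function $f$ on $n$ variables, let $\boldsymbol{s}\in\mathbb{C}^{2^n}$ be the vector with entries $s_{\boldsymbol{x}}=2^{-n/2}(-1)^{f(\boldsymbol{x})}$ (indexed by $\boldsymbol{x}\in\mathbb{Z}_2^n$ in the standard order consistent with the Kronecker product). Then $\mathrm{PAR}_{IHN}(f)=2^n\max_{U}\max_{k}|(U\boldsymbol{s})_k|^2$, the maximum over all $3^n$ transforms $U=U_0\otimes\cdots\otimes U_{n-1}$ with each $U_j\in\{I,H,N\}$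 and over all coordinates $k\in\mathbb{Z}_{2^n}$. *)

(* Defs.v *)
From mathcomp Require Import all_boot all_order all_algebra all_field.
Set Implicit Arguments. Unset Strict Implicit. Unset Printing Implicit Defensive.
Import Order.TTheory GRing.Theory Num.Theory.
Local Open Scope ring_scope.

Definition graph (n : nat) := {ffun 'I_n * 'I_n -> bool}.

Definition simple_graph n (G : graph n) : Prop :=
  forall i j : 'I_n, G (i, i) = false /\ G (i, j) = G (j, i).

Definition lc n (G : graph n) (v : 'I_n) : graph n :=
  [ffun p : 'I_n * 'I_n =>
     if [&& p.1 != p.2, G (v, p.1) & G (v, p.2)] then ~~ G p else G p].

Definition lc_step n : rel (graph n) := fun G H => [exists v, H == lc G v].
Definition in_lc_orbit n (G H : graph n) : bool := connect (@lc_step n) G H.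

Definition independent n (G : graph n) (S : {set 'I_n}) : bool :=
  [forall i in S, forall j in S, ~~ G (i, j)].

Definition alpha n (G : graph n) : nat :=
  (\max_(S : {set 'I_n} | independent G S) #|S|)%N.

Definition lambda n (G : graph n) : nat :=
  (\max_(H : graph n | in_lc_orbit G H) alpha H)%N.

Definition bvec n := {ffun 'I_n -> bool}.

Definition bool_fun n (G : graph n) (x : bvec n) : bool :=
  \big[addb/false]_(i : 'I_n) \big[addb/false]_(j : 'I_n | (i < j)%N)
     [&& G (i, j), x i & x j].

(* The three 2x2 matrices, coded by 'I_3: 0 = I, 1 = H, 2 = N;
   entries indexed by bools (false = 0, true = 1), row then column. *)
Definition gate_entry (g : 'I_3) (r c : bool) : algC :=
  match nat_of_ord g with
  | 0%N => if r == c then 1 else 0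
  | 1%N => (sqrtC 2)^-1 * (if r && c then -1 else 1)
  | _ => (sqrtC 2)^-1 *
         (if c then (if r then - 'i else 'i) else 1)
  end.

Definition svec n (f : bvec n -> bool) (x : bvec n) : algC :=
  (sqrtC 2 ^+ n)^-1 * (-1) ^+ f x.

(* (U s)_k for U = U_0 (x) ... (x) U_{n-1}, Kronecker product written out *)
Definition transform n (f : bvec n -> bool) (U : {ffun 'I_n -> 'I_3})
    (k : bvec n) : algC :=
  \sum_(x : bvec n) (\prod_(j : 'I_n) gate_entry (U j) (k j) (x j)) * svec f x.

Definition PAR_IHN n (f : bvec n -> bool) : algC :=
  2 ^+ n * \big[Num.max/0]_(U : {ffun 'I_n -> 'I_3})
             \big[Num.max/0]_(k : bvec n) `|transform f U k| ^+ 2.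

(* Main.v *)
Require Import Defs.
From mathcomp Require Import all_boot all_order all_algebra all_field.
From mathcomp Require Import ring.
Import Order.TTheory GRing.Theory Num.Theory.
Set Implicit Arguments. Unset Strict Implicit. Unset Printing Implicit Defensive.
Local Open Scope ring_scope.

Definition sgn (b : bool) : algC := (-1) ^+ b.

Definition gE (u : 'I_3) (r w t : bool) : algC :=
  match nat_of_ord u with
  | 0%N => if w then 0 else sgn (r && t)
  | 1%N => if t then 0 else sgn (r && w)
  | _ => if t == w then sgn (r && w) * (if w then - 'i else 1) else 0
  end.

Lemma cjM (a b : algC) : (a * b)^* = a^* * b^*. Proof. exact: rmorphM. Qed.
Lemma cjN (a : algC) : (- a)^* = - a^*. Proof. exact: rmorphN. Qed.
Lemma cjD (a b : algC) : (a + b)^* = a^* + b^*. Proof. exact: rmorphD. Qed.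

Lemma a_conj : ((sqrtC 2)^-1 : algC)^* = (sqrtC 2)^-1.
Proof. by rewrite fmorphV; congr (_^-1); apply/CrealP; rewrite qualifE /= sqrtC_ge0 ler0n. Qed.

Lemma a_sq : ((sqrtC 2)^-1 : algC) * (sqrtC 2)^-1 = 2^-1.
Proof. by rewrite -invfM -expr2 sqrtCK. Qed.

Lemma half2 : (2^-1 + 2^-1 : algC) = 1.
Proof. by field. Qed.

Definition gam (u : 'I_3) (r c : bool) : algC :=
  if nat_of_ord u == 1%N then (if r && c then -1 else 1)
  else (if c then (if r then - 'i else 'i) else 1).

Lemma gate_nz (u : 'I_3) r c : nat_of_ord u != 0%N ->
  gate_entry u r c = (sqrtC 2)^-1 * gam u r c.
Proof. by case: u => [[|[|[|m]]] Hm]. Qed.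

Lemma sum_a (X Y Z : bool -> algC) :
  \sum_(b : bool) ((sqrtC 2)^-1 * X b) * ((sqrtC 2)^-1 * Y b)^* * Z b
  = 2^-1 * \sum_(b : bool) X b * (Y b)^* * Z b.
Proof.
rewrite big_distrr /=; apply: eq_bigr => b _.
by rewrite cjM a_conj -a_sq; ring.
Qed.

Lemma ii : ('i : algC) * 'i = -1. Proof. by rewrite -expr2 sqrCi. Qed.

Lemma half_eq (X R : algC) : X = 2 * R -> 2^-1 * X = R.
Proof. by move=> ->; rewrite mulrA mulVf ?mul1r // pnatr_eq0. Qed.

Lemma gate_pair u r w t :
  \sum_(b : bool) gate_entry u r b * (gate_entry u r (b (+) w))^* * sgn (b && t)
  = gE u r w t.
Proof.
have [u0|u0] := eqVneq (nat_of_ord u) 0%N.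
  rewrite /gate_entry /gE /sgn u0 big_bool /=.
  by case: r; case: w; case: t => /=; rewrite ?mul1r ?mulr1 ?mul0r ?mulr0 ?addr0 ?add0r ?expr0 ?expr1 ?conjC1 ?conjC0; rewrite ?mul0r ?mul1r.
under eq_bigr do rewrite !gate_nz //.
rewrite sum_a; apply: half_eq.
move: u0; rewrite /gam /gE /sgn big_bool /=.
case: u => [[|[|[|m]]] Hm] // _ /=;
  case: r; case: w; case: t => /=; rewrite ?cjN ?conjC1 ?conjCi ?conjCN1;
  rewrite ?opprK ?mulrN ?mulNr ?mulrN ?mulNr ?opprK ?ii; ring.
Qed.

Definition tv n (G : graph n) (w : bvec n) (j : 'I_n) : bool :=
  \big[addb/false]_(i : 'I_n) (G (j, i) && w i).
Definition bxor n (x w : bvec n) : bvec n := [ffun j => x j (+) w j].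

Lemma andb_bigx (I : finType) (b : bool) (F : I -> bool) :
  b && \big[addb/false]_(i : I) F i = \big[addb/false]_(i : I) (b && F i).
Proof. by case: b => //=; rewrite big1. Qed.

Lemma quad_bool n (G : graph n) (sG : simple_graph G) (x w : bvec n) :
  bool_fun G (bxor x w) =
  bool_fun G x (+) bool_fun G w (+) \big[addb/false]_(j : 'I_n) (x j && tv G w j).
Proof.
rewrite /bool_fun.
have e : forall i j : 'I_n,
    [&& G (i, j), bxor x w i & bxor x w j] =
    [&& G (i, j), x i & x j] (+) [&& G (i, j), w i & w j] (+)
    ([&& x i, G (i, j) & w j] (+) [&& x j, G (j, i) & w i]).
  move=> i j; rewrite !ffunE (proj2 (sG j i)).
  by case: (G (i, j)); case: (x i); case: (x j); case: (w i); case: (w j).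
under eq_bigr do under eq_bigr do rewrite e.
under eq_bigr do rewrite !big_split /=.
rewrite big_split /= big_split /=; congr (_ (+) _).
rewrite big_split /=.
have e2 : forall i : 'I_n, x i && tv G w i =
   \big[addb/false]_(j : 'I_n) ([&& x i, G (i, j) & w j]).
  by move=> i; rewrite /tv andb_bigx; apply: eq_bigr => j _; rewrite andbA.
under [RHS]eq_bigr do rewrite e2.
set a := fun i j : 'I_n => [&& x i, G (i, j) & w j].
have -> : \big[addb/false]_(i < n) \big[addb/false]_(j < n | (i < j)%N) [&& x j, G (j, i) & w i]
  = \big[addb/false]_(i < n) \big[addb/false]_(j < n | (j < i)%N) a i j.
  under eq_bigr do rewrite big_mkcond /=.
  rewrite exchange_big /=; apply: eq_bigr => i _; rewrite [RHS]big_mkcond /=.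
  by apply: eq_bigr => j _.
rewrite -big_split /=; apply: eq_bigr => i _.
rewrite big_mkcond [X in _ (+) X]big_mkcond -big_split /=; apply: eq_bigr => j _.
case: (ltngtP i j) => //= eij; first by rewrite addbF.
have -> : j = i by apply: val_inj.
by rewrite (proj1 (sG i i)) andbF.
Qed.

Definition cond (u : 'I_3) (w t : bool) : bool :=
  match nat_of_ord u with 0%N => ~~ w | 1%N => ~~ t | _ => t == w end.

Lemma gE_norm u r w t : `|gE u r w t| = (cond u w t)%:R.
Proof.
rewrite /gE /cond /sgn; case: u => [[|[|[|m]]] Hm] /=;
  case: r; case: w; case: t => /=;
  by rewrite ?normr0 ?normrN ?normr1 ?mulr1 ?mul1r ?normrM ?normrN ?normr1 ?normCi ?expr0 ?expr1 ?mul1r.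
Qed.

Lemma gE_sum u w t : \sum_(r : bool) gE u r w t = 2 * (~~ w && ~~ t)%:R.
Proof.
rewrite /gE /sgn big_bool; case: u => [[|[|[|m]]] Hm] /=;
  case: w; case: t => /=; rewrite ?expr0 ?expr1 ?mulr1 ?mulr0 ?addr0; try ring.
Qed.

Lemma gE_pair u w t w' t' :
  \sum_(r : bool) gE u r w t * (gE u r w' t')^* = 2 * [&& w == w', t == t' & cond u w t]%:R.
Proof.
rewrite /gE /sgn /cond big_bool; case: u => [[|[|[|m]]] Hm] /=;
  case: w; case: t; case: w'; case: t' => /=;
  rewrite ?expr0 ?expr1 ?mulr1 ?mulr0 ?mul0r ?addr0 ?conjC0 ?conjC1 ?conjCN1 ?cjM ?cjN ?conjCi ?conjC1 ?conjCN1 ?opprK;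
  rewrite ?mulrN ?mulNr ?opprK ?ii ?mulr1 ?mul1r; try ring; rewrite ?mulrN ?mulNr -?expr2 ?sqrCi; ring.
Qed.

Definition Fk n (G : graph n) (U : {ffun 'I_n -> 'I_3}) (k : bvec n) : algC :=
  \sum_(w : bvec n) sgn (bool_fun G w) *
     \prod_(j : 'I_n) gE (U j) (k j) (w j) (tv G w j).

Lemma sgnK b : sgn b * sgn b = 1.
Proof. by case: b; rewrite /sgn /= ?expr0 ?expr1 ?mulr1 ?mulrNN ?mulr1. Qed.

Lemma sgn_conj b : (sgn b)^* = sgn b.
Proof. by case: b; rewrite /sgn /= ?expr0 ?expr1 ?conjC1 ?conjCN1. Qed.

Lemma sgn_addb a b : sgn (a (+) b) = sgn a * sgn b.
Proof. exact: signr_addb. Qed.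

Lemma sgn_big (I : finType) (F : I -> bool) :
  sgn (\big[addb/false]_(i : I) F i) = \prod_(i : I) sgn (F i).
Proof.
by apply: (big_morph sgn) => [a b|]; rewrite /sgn ?signr_addb ?expr0.
Qed.

Lemma sgn_quad n (G : graph n) (sG : simple_graph G) (x w : bvec n) :
  sgn (bool_fun G x) * sgn (bool_fun G (bxor x w)) =
  sgn (bool_fun G w) * \prod_(j : 'I_n) sgn (x j && tv G w j).
Proof.
rewrite quad_bool // !sgn_addb (sgn_big (fun j => x j && tv G w j)).
by rewrite !mulrA sgnK mul1r.
Qed.

Lemma bxor_inj n (x : bvec n) : injective (bxor x).
Proof.
move=> a b /ffunP h; apply/ffunP => j; move: (h j); rewrite !ffunE.
by case: (x j); case: (a j); case: (b j).
Qed.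

Lemma c_conj n : (((sqrtC 2) ^+ n)^-1 : algC)^* = ((sqrtC 2) ^+ n)^-1.
Proof.
apply: conj_Creal; apply: ger0_real; rewrite invr_ge0 exprn_ge0 //.
by rewrite sqrtC_ge0 ler0n.
Qed.

Lemma c_sq n : 2 ^+ n * ((((sqrtC 2) ^+ n)^-1 : algC) * ((sqrtC 2) ^+ n)^-1) = 1.
Proof.
rewrite -invfM -exprMn -expr2 sqrtCK mulfV //.
by rewrite expf_neq0 // pnatr_eq0.
Qed.

Lemma Fk_eq n (G : graph n) (sG : simple_graph G) U k :
  2 ^+ n * `|transform (bool_fun G) U k| ^+ 2 = Fk G U k.
Proof.
rewrite normCK /transform /svec rmorph_sum /=.
under [X in _ * (_ * X)]eq_bigr do rewrite !cjM c_conj -/(sgn _) sgn_conj.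
rewrite mulr_suml mulr_sumr.
pose c := (((sqrtC 2) ^+ n)^-1 : algC).
pose P := fun x : bvec n => \prod_(j : 'I_n) gate_entry (U j) (k j) (x j).
have step : forall x : bvec n,
   2 ^+ n * (P x * (c * (-1) ^+ (bool_fun G x)) *
     \sum_(y : bvec n) ((P y)^* * (c * sgn (bool_fun G y))))
   = \sum_(w : bvec n) (P x * (P (bxor x w))^*) *
        (sgn (bool_fun G x) * sgn (bool_fun G (bxor x w))).
  move=> x; rewrite mulr_sumr mulr_sumr (reindex_inj (@bxor_inj _ x)) /=.
  apply: eq_bigr => w _.
  have e : forall (A B C D : algC), 2 ^+ n * (A * (c * B) * (C * (c * D)))
      = (A * C) * (B * D) * (2 ^+ n * (c * c)) by move=> A B C D; ring.
  by rewrite e c_sq mulr1.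
rewrite (eq_bigr _ (fun x _ => step x)).
rewrite exchange_big /=; apply: eq_bigr => w _.
under eq_bigr => x _ do rewrite sgn_quad // /P rmorph_prod /= mulrCA -!big_split /=.
rewrite -mulr_sumr; congr (_ * _).
under eq_bigr => x _ do under eq_bigr => j _ do rewrite ffunE.
rewrite -(bigA_distr_bigA (fun j b => gate_entry (U j) (k j) b * (gate_entry (U j) (k j) (b (+) w j))^* * sgn (b && tv G w j))) /=.
by apply: eq_bigr => j _; rewrite gate_pair.
Qed.

Definition Kset n (G : graph n) (U : {ffun 'I_n -> 'I_3}) : {set bvec n} :=
  [set w : bvec n | [forall j, cond (U j) (w j) (tv G w j)]].

Lemma prod_bool (I : finType) (c : I -> bool) :
  \prod_(j : I) ((c j)%:R : algC) = ([forall j, c j])%:R.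
Proof.
case: forallP => h.
  by rewrite big1 // => j _; rewrite h.
have [j cj|nc] := pickP (fun j => ~~ c j).
  by rewrite (bigD1 j) //= (negbTE cj) mul0r.
by case: h => j; move: (nc j) => /= /negbFE.
Qed.

Lemma prod2_bool n (c : 'I_n -> bool) :
  \prod_(j : 'I_n) (2 * ((c j)%:R : algC)) = 2 ^+ n * ([forall j, c j])%:R.
Proof. by rewrite big_split /= prod_bool prodr_const card_ord. Qed.

Lemma sum_card (T : finType) (A : {set T}) :
  \sum_(w : T) ((w \in A)%:R : algC) = #|A|%:R.
Proof.
rewrite (bigID (mem A)) /= [X in _ + X]big1 ?addr0; last by move=> w /negbTE ->.
by rewrite (eq_bigr (fun _ => 1)) ?sumr_const // => w ->.
Qed.

Lemma sgn_norm b : `|sgn b| = 1.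
Proof. by case: b; rewrite /sgn /= ?expr0 ?expr1 ?normrN normr1. Qed.

Lemma Fk_le n (G : graph n) U k : `|Fk G U k| <= #|Kset G U|%:R.
Proof.
apply: le_trans (ler_norm_sum _ _ _) _.
rewrite -sum_card; apply: ler_sum => w _.
rewrite normrM sgn_norm mul1r normr_prod.
under eq_bigr do rewrite gE_norm.
by rewrite prod_bool inE.
Qed.

Definition bzero n : bvec n := [ffun => false].

Lemma bool_fun0 n (G : graph n) : bool_fun G (bzero n) = false.
Proof. by rewrite /bool_fun big1 // => i _; rewrite big1 // => j _; rewrite /bzero !ffunE !andbF. Qed.

Lemma tv0 n (G : graph n) j : tv G (bzero n) j = false.
Proof. by rewrite /tv big1 // => i _; rewrite /bzero ffunE andbF. Qed.

Lemma Fk_sum n (G : graph n) U : \sum_(k : bvec n) Fk G U k = 2 ^+ n.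
Proof.
rewrite /Fk exchange_big /=.
under eq_bigr => w _ do rewrite -mulr_sumr -(bigA_distr_bigA (fun j r => gE (U j) r (w j) (tv G w j))) /=.
under eq_bigr => w _ do under eq_bigr => j _ do rewrite gE_sum.
under eq_bigr => w _ do rewrite prod2_bool.
rewrite (bigD1 (bzero n)) //= big1 ?addr0.
  rewrite bool_fun0 /sgn expr0 mul1r.
  by rewrite (_ : [forall j, _] = true) ?mulr1 //; apply/forallP => j; rewrite tv0 /bzero ffunE.
move=> w nw; case: forallP => h; last by rewrite !mulr0.
case/eqP: nw; apply/ffunP => j; rewrite ffunE; by case/andP: (h j) => /negbTE.
Qed.

Lemma Fk_sq n (G : graph n) U :
  \sum_(k : bvec n) Fk G U k * (Fk G U k)^* = 2 ^+ n * #|Kset G U|%:R.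
Proof.
under eq_bigr => k _ do rewrite /Fk rmorph_sum mulr_suml.
rewrite exchange_big -sum_card mulr_sumr /=; apply: eq_bigr => w _.
under eq_bigr => k _ do rewrite mulr_sumr.
rewrite exchange_big /=.
have e : forall w' : bvec n,
  \sum_(k : bvec n) (sgn (bool_fun G w) * \prod_j gE (U j) (k j) (w j) (tv G w j)) *
     (sgn (bool_fun G w') * \prod_j gE (U j) (k j) (w' j) (tv G w' j))^*
  = sgn (bool_fun G w) * sgn (bool_fun G w') * (2 ^+ n *
      ([forall j, [&& w j == w' j, tv G w j == tv G w' j & cond (U j) (w j) (tv G w j)]])%:R).
  move=> w'; rewrite -prod2_bool.
  under [in RHS]eq_bigr => j _ do rewrite -gE_pair.
  rewrite (bigA_distr_bigA (fun j r => gE (U j) r (w j) (tv G w j) * (gE (U j) r (w' j) (tv G w' j))^*)) mulr_sumr.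
  apply: eq_bigr => k _; rewrite cjM sgn_conj rmorph_prod big_split /=; ring.
rewrite (eq_bigr _ (fun w' _ => e w')) (bigD1 w) //= big1 ?addr0.
  rewrite sgnK mul1r inE; congr (_ * ((nat_of_bool _)%:R)).
  by apply: eq_forallb => j; rewrite !eqxx.
move=> w' nw; case: forallP => h; last by rewrite !mulr0.
case/eqP: nw; apply/ffunP => j; by case/and3P: (h j) => /eqP.
Qed.

Lemma max_cases (x y : algC) : Num.max x y = x \/ Num.max x y = y.
Proof. by rewrite /Num.max /Order.max; case: (x < y)%O; [right|left]. Qed.

Lemma max_ge (x y : algC) : x \is Num.real -> y \is Num.real ->
  x <= Num.max x y /\ y <= Num.max x y.
Proof.
move=> xr yr; rewrite /Num.max /Order.max.
case: ifP => h; first by split => //; apply: ltW.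
by split => //; move: h; rewrite (real_ltNge xr yr) => /negbFE.
Qed.

Lemma bigmax_eqc (I : finType) (F : I -> algC) (c : algC) :
  (forall i, 0 <= F i <= c) -> (exists i, F i = c) ->
  \big[Num.max/0]_(i : I) F i = c.
Proof.
move=> hF [i0 hi0].
have H1 : forall r : seq I, 0 <= \big[Num.max/0]_(i <- r) F i <= c.
  elim => [|a r IH]; first by rewrite big_nil lexx /=; case/andP: (hF i0) => h1 h2; apply: le_trans h2.
  by rewrite big_cons; case: (max_cases (F a) (\big[Num.max/0]_(i <- r) F i)) => ->.
have H2 : forall r : seq I, i0 \in r -> F i0 <= \big[Num.max/0]_(i <- r) F i.
  elim => [|a r IH] //; rewrite in_cons big_cons.
  have [ra rb] : F a \is Num.real /\ \big[Num.max/0]_(i <- r) F i \is Num.real.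
    by split; apply: ger0_real; [case/andP: (hF a) | case/andP: (H1 r)].
  case: (max_ge ra rb) => m1 m2.
  by case/orP => [/eqP ->|/IH h]; [exact: m1 | exact: le_trans h m2].
apply/le_anti/andP; split; first by case/andP: (H1 (index_enum I)).
by rewrite -{1}hi0; apply: H2; rewrite mem_index_enum.
Qed.

Lemma Fk_ge0 n (G : graph n) (sG : simple_graph G) U k : 0 <= Fk G U k.
Proof. by rewrite -Fk_eq // mulr_ge0 ?exprn_ge0 ?ler0n ?normr_ge0. Qed.

Lemma Fk_ub n (G : graph n) (sG : simple_graph G) U k : Fk G U k <= #|Kset G U|%:R.
Proof. by rewrite -(ger0_norm (Fk_ge0 sG U k)) Fk_le. Qed.

Lemma Fk_exists n (G : graph n) (sG : simple_graph G) U :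
  exists k, Fk G U k = #|Kset G U|%:R.
Proof.
set c : algC := #|Kset G U|%:R.
have sq : \sum_(k : bvec n) Fk G U k * (c - Fk G U k) = 0.
  rewrite (eq_bigr (fun k => c * Fk G U k - Fk G U k * (Fk G U k)^*)); last first.
    move=> k _; rewrite conj_Creal ?ger0_real ?Fk_ge0 //; ring.
  by rewrite sumrB -mulr_sumr Fk_sum Fk_sq mulrC subrr.
have nn : forall k, 0 <= Fk G U k * (c - Fk G U k).
  by move=> k; rewrite mulr_ge0 ?Fk_ge0 // subr_ge0 Fk_ub.
have z := psumr_eq0P (fun k _ => nn k) sq.
have [k hk|h0] := pickP (fun k => Fk G U k != 0).
  exists k; move/eqP: (z k isT); rewrite mulf_eq0 (negbTE hk) /= subr_eq0.
  by move/eqP.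
have : \sum_(k : bvec n) Fk G U k = 0 by rewrite big1 // => k _; apply/eqP; move: (h0 k) => /= /negbFE.
by rewrite Fk_sum => /eqP; rewrite expf_eq0 pnatr_eq0 andbF.
Qed.

Lemma inner_max n (G : graph n) (sG : simple_graph G) U :
  \big[Num.max/0]_(k : bvec n) `|transform (bool_fun G) U k| ^+ 2
  = #|Kset G U|%:R / 2 ^+ n.
Proof.
have n0 : (2 ^+ n : algC) != 0 by rewrite expf_neq0 // pnatr_eq0.
have e : forall k, `|transform (bool_fun G) U k| ^+ 2 = Fk G U k / 2 ^+ n.
  by move=> k; rewrite -Fk_eq // [2 ^+ n * _]mulrC mulfK.
under eq_bigr do rewrite e.
have p : 0 < (2 ^+ n : algC)^-1 by rewrite invr_gt0 exprn_gt0 // ltr0n.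
apply: bigmax_eqc.
  move=> k; rewrite divr_ge0 ?Fk_ge0 ?exprn_ge0 ?ler0n //=.
  by rewrite ler_pM2r // Fk_ub.
by case: (Fk_exists sG U) => k hk; exists k; rewrite hk.
Qed.

Lemma PAR_eq n (G : graph n) (sG : simple_graph G) (L : nat) :
  (forall U, #|Kset G U| <= 2 ^ L)%N -> (exists U, #|Kset G U| = 2 ^ L)%N ->
  PAR_IHN (bool_fun G) = 2 ^+ L.
Proof.
move=> hle [U0 hU0].
have n0 : (2 ^+ n : algC) != 0 by rewrite expf_neq0 // pnatr_eq0.
have p : 0 < (2 ^+ n : algC)^-1 by rewrite invr_gt0 exprn_gt0 // ltr0n.
rewrite /PAR_IHN.
under eq_bigr do rewrite inner_max //.
rewrite (@bigmax_eqc _ _ (2 ^+ L / 2 ^+ n)).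
- by rewrite mulrC mulfVK.
- move=> U; rewrite divr_ge0 ?ler0n ?exprn_ge0 ?ler0n //=.
  by rewrite ler_pM2r // -natrX ler_nat hle.
- by exists U0; rewrite hU0 natrX.
Qed.

Local Close Scope ring_scope.

Lemma card_supp n (S : {set 'I_n}) :
  #|[set w : bvec n | [forall j, (j \notin S) ==> ~~ w j]]| = (2 ^ #|S|)%N.
Proof.
rewrite -card_bool -(card_pffun_on false S {: bool}); apply: eq_card => w.
rewrite inE; apply/forallP/familyP => h j; move: (h j);
  by case: (j \in S) => //=; case: (w j).
Qed.

Lemma lc_simple n (G : graph n) v : simple_graph G -> simple_graph (lc G v).
Proof.
move=> sG i j; rewrite !ffunE /= eqxx /= (proj1 (sG i i)); split => //.
by rewrite eq_sym (proj2 (sG i j)) [G (v, i) && _]andbC.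
Qed.

Lemma lc_invol n (G : graph n) v : simple_graph G -> lc (lc G v) v = G.
Proof.
move=> sG; apply/ffunP => [[i j]]; rewrite !ffunE /= !(proj1 (sG v v)) /= !andbF.
by case: [&& i != j, G (v, i) & G (v, j)] => //; rewrite negbK.
Qed.

Definition psi n (G : graph n) v (w : bvec n) : bvec n :=
  [ffun i => w i (+) ((i == v) && tv G w v)].

Definition sYZ (u : 'I_3) : 'I_3 :=
  inord (match nat_of_ord u with 0%N => 2 | 1%N => 1 | _ => 0 end).
Definition sXY (u : 'I_3) : 'I_3 :=
  inord (match nat_of_ord u with 0%N => 0 | 1%N => 2 | _ => 1 end).

Definition phi n (G : graph n) v (U : {ffun 'I_n -> 'I_3}) : {ffun 'I_n -> 'I_3} :=
  [ffun j => if j == v then sYZ (U j) else if G (v, j) then sXY (U j) else U j].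

Lemma tv_psi_v n (G : graph n) v w : simple_graph G -> tv G (psi G v w) v = tv G w v.
Proof.
move=> sG; rewrite /tv; apply: eq_bigr => i _; rewrite ffunE.
by case: (eqVneq i v) => [->|_]; rewrite ?(proj1 (sG v v)) ?addbF.
Qed.

Lemma psi_invol n (G : graph n) v : simple_graph G -> involutive (psi G v).
Proof.
move=> sG w; apply/ffunP => i; rewrite ffunE tv_psi_v // ffunE.
by rewrite -addbA addbb addbF.
Qed.

Lemma xor_and_big (I : finType) (j : I) (a : I -> bool) :
  \big[addb/false]_(i : I) ((j != i) && a i) = \big[addb/false]_(i : I) a i (+) a j.
Proof.
rewrite (bigD1 j) //= eqxx /= [in RHS](bigD1 j) //= addbC addbA addbb /=.
by apply: eq_bigr => i ij; rewrite eq_sym ij.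
Qed.

Lemma tv_lc n (G : graph n) v w j : simple_graph G ->
  tv (lc G v) (psi G v w) j = tv G w j (+) (G (v, j) && w j).
Proof.
move=> sG.
set T := tv G w v.
have e : forall i, lc G v (j, i) && psi G v w i =
   (G (j, i) && w i) (+) (G (j, i) && ((i == v) && T))
     (+) (G (v, j) && ((j != i) && (G (v, i) && w i))).
  move=> i; rewrite !ffunE /= -/T.
  case: (eqVneq i v) => [->|nv] /=; rewrite ?(proj1 (sG v v)) ?andbF ?addbF /=.
    by case: (G (j, v)); case: (w v); case: T; case: (j != v).
  by case: (G (j, i)); case: (w i); case: (G (v, i)); case: (G (v, j)); case: (j != i).
rewrite /tv (eq_bigr _ (fun i _ => e i)) !big_split /=.
rewrite -andb_bigx xor_and_big -/(tv G w v) -/T.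
have mid : \big[addb/false]_(i < n) [&& G (j, i), i == v & T] = G (j, v) && T.
  rewrite (bigD1 v) //= eqxx /= big1 ?addbF // => i /negbTE ->; by rewrite andbF.
rewrite mid.
clear e mid; rewrite (proj2 (sG j v)) /T.
by case: (G (v, j)); case: (tv G w v); case: (w j); case: (\big[addb/false]_i (G (j, i) && w i)).
Qed.

Lemma cond_phi n (G : graph n) v U w j : simple_graph G ->
  cond (phi G v U j) (psi G v w j) (tv (lc G v) (psi G v w) j) =
  cond (U j) (w j) (tv G w j).
Proof.
move=> sG; rewrite tv_lc // !ffunE.
case: (eqVneq j v) => [->|nv] /=.
  rewrite (proj1 (sG v v)) /= addbF /sYZ /cond.
  by case: (U v) => [[|[|[|m]]] Hm] //=; rewrite inordK //; case: (w v); case: (tv G w v).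
rewrite addbF.
case: (G (v, j)) => /=; rewrite ?addbF //; rewrite /sXY /cond.
by case: (U j) => [[|[|[|m]]] Hm] //=; rewrite inordK //; case: (w j); case: (tv G w j).
Qed.

Lemma card_K_lc n (G : graph n) v U : simple_graph G ->
  #|Kset (lc G v) (phi G v U)| = #|Kset G U|.
Proof.
move=> sG.
have -> : Kset G U = psi G v @^-1: Kset (lc G v) (phi G v U).
  apply/setP => w; rewrite !inE; apply: eq_forallb => j.
  by rewrite cond_phi.
by rewrite card_preimset //; apply: (can_inj (psi_invol v sG)).
Qed.

Lemma step_simple n (G H : graph n) : lc_step G H -> simple_graph G -> simple_graph H.
Proof. by case/existsP => v /eqP -> /lc_simple; apply. Qed.

Lemma orbit_simple n (G H : graph n) :
  in_lc_orbit G H -> simple_graph G -> simple_graph H.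
Proof.
case/connectP => p pp -> {H}; elim: p G pp => [|a p IH] G //= /andP [sa pp] sG.
by apply: IH pp _; apply: step_simple sa sG.
Qed.

Definition PK n (c : nat) (H : graph n) := exists U, (c <= #|Kset H U|)%N.

Lemma PK_lc n c (G : graph n) v : simple_graph G -> PK c G -> PK c (lc G v).
Proof. by move=> sG [U hU]; exists (phi G v U); rewrite card_K_lc. Qed.

Lemma PK_step n c (G H : graph n) : simple_graph G -> lc_step G H -> (PK c G <-> PK c H).
Proof.
move=> sG /existsP [v /eqP ->]; split; first exact: PK_lc.
by move=> h; rewrite -(lc_invol v sG); apply: PK_lc => //; apply: lc_simple.
Qed.

Lemma PK_orbit n c (G H : graph n) : simple_graph G -> in_lc_orbit G H -> (PK c G <-> PK c H).
Proof.
move=> sG /connectP [p pp ->] {H}; elim: p G pp sG => [|a p IH] G //= /andP [sa pp] sG.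
have sa' := step_simple sa sG.
by rewrite (PK_step c sG sa); apply: IH.
Qed.

Definition Dset n (U : {ffun 'I_n -> 'I_3}) : {set 'I_n} :=
  [set j | nat_of_ord (U j) != 0%N].

Lemma lambda_ge n (G0 H : graph n) S : in_lc_orbit G0 H -> independent H S ->
  (#|S| <= lambda G0)%N.
Proof.
move=> oH iS; apply: leq_trans (leq_bigmax_cond _ oH).
rewrite /alpha; exact: (leq_bigmax_cond (F := fun S : {set _} => #|S|) S iS).
Qed.

Lemma K_indep n (H : graph n) U : independent H (Dset U) ->
  (#|Kset H U| <= 2 ^ #|Dset U|)%N.
Proof.
move=> _; rewrite -card_supp; apply: subset_leq_card; apply/subsetP => w.
rewrite !inE => /forallP h; apply/forallP => j; move: (h j).
by rewrite inE negbK /cond; case: (nat_of_ord (U j)) => //= /eqP ->.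
Qed.

Lemma sXY_nz u : (nat_of_ord (sXY u) != 0%N) = (nat_of_ord u != 0%N).
Proof. by rewrite /sXY; case: u => [[|[|[|m]]] Hm] //=; rewrite inordK. Qed.

Lemma Dset_phi2 n (G : graph n) v (U : {ffun 'I_n -> 'I_3}) : nat_of_ord (U v) = 2%N ->
  Dset (phi G v U) = Dset U :\ v.
Proof.
move=> h; apply/setP => j; rewrite !inE !ffunE.
case: (eqVneq j v) => [->|nv] /=; first by rewrite /sYZ h inordK.
by case: (G (v, j)); rewrite ?sXY_nz.
Qed.

Lemma Dset_phi1 n (G : graph n) v (U : {ffun 'I_n -> 'I_3}) : nat_of_ord (U v) = 1%N ->
  Dset (phi G v U) = Dset U.
Proof.
move=> h; apply/setP => j; rewrite !inE !ffunE.
case: (eqVneq j v) => [->|nv] /=; first by rewrite /sYZ h inordK // h.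
by case: (G (v, j)); rewrite ?sXY_nz.
Qed.

Lemma phi_nb n (G : graph n) v (U : {ffun 'I_n -> 'I_3}) j : j != v -> G (v, j) ->
  nat_of_ord (U j) = 1%N -> nat_of_ord (phi G v U j) = 2%N.
Proof. by move=> nv gj h; rewrite ffunE (negbTE nv) gj /sXY h inordK. Qed.

Lemma U3 (u : 'I_3) : nat_of_ord u != 0%N -> nat_of_ord u = 1%N \/ nat_of_ord u = 2%N.
Proof. by case: u => [[|[|[|m]]] Hm] //=; [left|right]. Qed.

Lemma Kub n (G0 : graph n) (sG0 : simple_graph G0) m : forall H U,
  in_lc_orbit G0 H -> (#|Dset U| <= m)%N -> (#|Kset H U| <= 2 ^ lambda G0)%N.
Proof.
elim: m => [|m IH] H U oH hD.
  have D0 : Dset U = set0 by apply/eqP; rewrite -cards_eq0 -leqn0.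
  apply: leq_trans (K_indep _) _.
    by rewrite D0; apply/forallP => i; rewrite inE.
  by rewrite D0 cards0 expn0 expn_gt0.
have sH := orbit_simple oH sG0.
have [ind|nind] := boolP (independent H (Dset U)).
  apply: leq_trans (K_indep ind) _; rewrite leq_exp2l //.
  exact: lambda_ge oH ind.
(* a step at a vertex v with U v = 2 decreases Dset *)
have step2 : forall H' U' v, in_lc_orbit G0 H' -> (#|Dset U'| <= m.+1)%N ->
    v \in Dset U' -> nat_of_ord (U' v) = 2%N -> (#|Kset H' U'| <= 2 ^ lambda G0)%N.
  move=> H' U' v oH' hD' vD h2.
  have sH' := orbit_simple oH' sG0.
  rewrite -(card_K_lc v U' sH').
  apply: IH.
    apply: connect_trans oH' (connect1 _); by apply/existsP; exists v.
  rewrite Dset_phi2 //; move: hD'; rewrite (cardsD1 v (Dset U')) vD.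
  by rewrite add1n ltnS.
move: nind; rewrite /independent => /forallPn [i]; rewrite negb_imply => /andP [iD].
move/forallPn => [j]; rewrite negb_imply negbK => /andP [jD hij].
have ij : j != i by apply: contraTneq hij => ->; rewrite (proj1 (sH i i)).
have iD' : nat_of_ord (U i) != 0%N by move: iD; rewrite inE.
have jD' : nat_of_ord (U j) != 0%N by move: jD; rewrite inE.
have [i1|i2] := U3 iD'.
  have [j1|j2] := U3 jD'.
    (* step at j first, making i have value 2 *)
    have oH1 : in_lc_orbit G0 (lc H j).
      apply: connect_trans oH (connect1 _); by apply/existsP; exists j.
    rewrite -(card_K_lc j U sH).
    apply: (step2 _ _ i oH1).
    - by rewrite Dset_phi1.
    - by rewrite Dset_phi1.
    - by apply: phi_nb => //; [rewrite eq_sym | rewrite (proj2 (sH j i))].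
  exact: (step2 _ _ j oH hD jD j2).
exact: (step2 _ _ i oH hD iD i2).
Qed.

Definition gX : 'I_3 := @Ordinal 3 1 isT.
Definition gZ : 'I_3 := @Ordinal 3 0 isT.

Lemma K_lower n (H : graph n) S : independent H S ->
  (2 ^ #|S| <= #|Kset H [ffun j => if j \in S then gX else gZ]|)%N.
Proof.
move=> iS; rewrite -card_supp; apply: subset_leq_card; apply/subsetP => w.
rewrite !inE => /forallP h; apply/forallP => j; rewrite ffunE.
case jS: (j \in S); rewrite /cond /=; last by move: (h j); rewrite jS.
rewrite /tv big1 // => i _.
case iS': (i \in S).
  by move/forallP: iS => /(_ j); rewrite jS /= => /forallP /(_ i); rewrite iS' /= => /negbTE ->.
by move: (h i); rewrite iS' /= => /negbTE ->; rewrite andbF.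
Qed.

Lemma Klb n (G0 : graph n) (sG0 : simple_graph G0) : PK (2 ^ lambda G0) G0.
Proof.
have o0 : in_lc_orbit G0 G0 by apply: connect0.
have [H oH eH] : {H | in_lc_orbit G0 H & lambda G0 = alpha H}.
  rewrite /lambda; apply: eq_bigmax_cond.
  by apply/card_gt0P; exists G0.
have [S iS eS] : {S | independent H S & alpha H = #|S|}.
  rewrite /alpha; apply: eq_bigmax_cond.
  by apply/card_gt0P; exists set0; rewrite /independent; apply/forallP => i; rewrite inE.
apply/(PK_orbit _ sG0 oH).
by exists [ffun j => if j \in S then gX else gZ]; rewrite eH eS; apply: K_lower.
Qed.

Local Open Scope ring_scope.
Theorem mainTheorem5 (n : nat) (G : graph n) :
  simple_graph G ->
  (forall H : graph n, in_lc_orbit G H ->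
     PAR_IHN (bool_fun H) = 2 ^+ lambda G) /\
  PAR_IHN (bool_fun G) = 2 ^+ lambda G.
Proof.
move=> sG.
have all : forall H : graph n, in_lc_orbit G H -> PAR_IHN (bool_fun H) = 2 ^+ lambda G.
  move=> H oH; have sH := orbit_simple oH sG.
  apply: (PAR_eq sH).
    by move=> U; exact: (Kub sG oH (leqnn _)).
  have [U hU] : PK (2 ^ lambda G) H by apply/(PK_orbit _ sG oH); apply: Klb.
  exists U; apply/eqP; rewrite eqn_leq hU andbT.
  exact: (Kub sG oH (leqnn _)).
by split => //; apply: all; apply: connect0.
Qed.
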